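(* Let $d\ge2$ be an integer and $\delta\in(0,d]$ real. Let $P$ be a set of $n$ points in $\mathbb{R}^d$ with $\dim_{\mathsf f}(P)=\delta$ and let $D=\{\mathrm{ball}(x,1):x\in P\}$. Let $D'\subseteq D$ consist of $k$ pairwise disjoint balls. Then there exist $c\in\mathbb{R}^d$ and $r>0$ such that at most $H$ balls of $D'$ intersect $\mathrm{sphere}(c,r)$, and at most $(1-2^{-O(d)})k$ balls of $D'$ are contained in the interior of $\mathrm{sphere}(c,r)$ and at most $(1-2^{-O(d)})k$ in its exterior, where $H=O(k^{1-1/\delta})$ if $\delta>1$ and $H=O(1)$ if $\delta\le1$.
   Context: $\mathrm{ball}(x,r)$ and $\mathrm{sphere}(x,r)$ denote the closed Euclidean ball and the sphere of radius $r$ centered at $x$. Fractal dimension: for a family of finite pointsets $P\subseteq\mathbb{R}^d$ (with $|P|$ unbounded), $\dim_{\mathsf f}(P)$ is the infimum of $\delta$ such that there is a constant $c_0$ with: for every member $P$, every $\varepsilon>0$, every $r\ge2\varepsilon$, every $\varepsilon$-net $N$ of $P$ (a subset of $P$ whose points are pairwise at distance $\ge\varepsilon$ and such that every point of $P$ is within distance $\varepsilon$ of $N$) and every $x$, $|N\cap\mathrm{ball}(x,r)|\le c_0(r/\varepsilon)^\delta$. Hidden constants may depend on $d,\delta,c_0$. *)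

(* Defs.v *)
(* points of R^d are lists of reals of length d. *)
From Stdlib Require Export Reals List.
Export ListNotations.
Open Scope R_scope.

Definition in_Rd (d : nat) (x : list R) : Prop := length x = d.

Definition dist (x y : list R) : R :=
  sqrt (fold_right Rplus 0 (map (fun p => (fst p - snd p) ^ 2) (combine x y))).

Definition ball (d : nat) (x : list R) (r : R) (y : list R) : Prop :=
  in_Rd d y /\ dist x y <= r.
Definition sphere (d : nat) (x : list R) (r : R) (y : list R) : Prop :=
  in_Rd d y /\ dist x y = r.

Definition at_most (L : list (list R)) (Q : list R -> Prop) (m : R) : Prop :=
  forall S : list (list R), NoDup S -> incl S L -> (forall y, In y S -> Q y) ->
    INR (length S) <= m.

Definition is_net (eps : R) (N P : list (list R)) : Prop :=
  incl N P /\
  (forall p q, In p N -> In q N -> p <> q -> eps <= dist p q) /\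
  (forall p, In p P -> exists q, In q N /\ dist p q <= eps).

(* the defining bound of fractal dimension delta with constant c0 *)
Definition frac_bound (d : nat) (delta c0 : R) (P : list (list R)) : Prop :=
  forall (eps r : R) (N : list (list R)) (x : list R),
    0 < eps -> 2 * eps <= r -> is_net eps N P -> in_Rd d x ->
    at_most N (ball d x r) (c0 * Rpower (r / eps) delta).

Definition ball_meets_sphere (d : nat) (c : list R) (r : R) (a : list R) : Prop :=
  exists y, ball d a 1 y /\ sphere d c r y.
Definition ball_inside (d : nat) (c : list R) (r : R) (a : list R) : Prop :=
  forall y, ball d a 1 y -> dist c y < r.
Definition ball_outside (d : nat) (c : list R) (r : R) (a : list R) : Prop :=
  forall y, ball d a 1 y -> r < dist c y.

Definition H_bound (CH delta k : R) : R :=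
  if Rlt_dec 1 delta then CH * Rpower k (1 - 1 / delta) else CH.

(* Main.v *)
Require Import Defs.
From Stdlib Require Import Reals List.
Open Scope R_scope.
From Stdlib Require Import Lra Lia Psatz ZArith Classical.
Require Import Defs.

Fixpoint sqd (x y : list R) : R :=
  match x, y with a::x', b::y' => (a-b)^2 + sqd x' y' | _, _ => 0 end.

Lemma dist_sqd x y : dist x y = sqrt (sqd x y).
Proof.
  unfold dist; f_equal. revert y; induction x as [|a x IH]; destruct y; simpl; auto.
  rewrite IH; reflexivity.
Qed.

Lemma sqd_ge0 x y : 0 <= sqd x y.
Proof. revert y; induction x as [|a x IH]; intros [|b y]; simpl; try lra. specialize (IH y); pose proof (pow2_ge_0 (a-b)); simpl in *; lra. Qed.

Lemma sqd_sym x y : sqd x y = sqd y x.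
Proof. revert y; induction x as [|a x IHx]; intros [|b y]; simpl; auto. rewrite IHx; ring. Qed.

Lemma sqd_refl x : sqd x x = 0.
Proof. induction x; simpl; auto. rewrite IHx; ring. Qed.

Lemma dist_sym x y : dist x y = dist y x.
Proof. rewrite !dist_sqd, sqd_sym; auto. Qed.
Lemma dist_refl x : dist x x = 0.
Proof. rewrite dist_sqd, sqd_refl, sqrt_0; auto. Qed.
Lemma dist_ge0 x y : 0 <= dist x y.
Proof. rewrite dist_sqd; apply sqrt_pos. Qed.

Fixpoint ipd (x y z : list R) : R :=
  match x, y, z with a::x', b::y', c::z' => (a-b)*(b-c) + ipd x' y' z' | _, _, _ => 0 end.

Lemma sqd_split x y z : length x = length y -> length y = length z ->
  sqd x z = sqd x y + 2 * ipd x y z + sqd y z.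
Proof.
  revert y z; induction x as [|a x IHx]; intros [|b y] [|c z]; simpl; intros; try lra; try discriminate.
  rewrite (IHx y z) by lia. ring.
Qed.

Lemma cs_step a b P Q1 Q2 : 0 <= Q1 -> 0 <= Q2 -> P*P <= Q1*Q2 ->
  (a*b+P)*(a*b+P) <= (a*a+Q1)*(b*b+Q2).
Proof.
  intros h1 h2 h3.
  assert (Hs: 0 <= sqrt Q1 * sqrt Q2) by (apply Rmult_le_pos; apply sqrt_pos).
  assert (HP: Rabs P <= sqrt Q1 * sqrt Q2).
  { rewrite <- sqrt_mult by auto. rewrite <- sqrt_Rsqr_abs. apply sqrt_le_1_alt.
    unfold Rsqr; lra. }
  pose proof (sqrt_sqrt Q1 h1). pose proof (sqrt_sqrt Q2 h2).
  pose proof (Rle_abs P). pose proof (Rle_abs (-P)). rewrite Rabs_Ropp in *.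
  assert (E1: 0 <= (a*sqrt Q2 - b*sqrt Q1)^2) by apply pow2_ge_0.
  assert (E2: 0 <= (a*sqrt Q2 + b*sqrt Q1)^2) by apply pow2_ge_0.
  assert (E3: a*b*P <= Rabs (a*b) * (sqrt Q1 * sqrt Q2)).
  { destruct (Rle_dec 0 (a*b)).
    - rewrite Rabs_right by lra. apply Rmult_le_compat_l; lra.
    - rewrite Rabs_left by lra. replace (a*b*P) with ((-(a*b))*(-P)) by ring.
      apply Rmult_le_compat_l; lra. }
  assert (E4: Rabs (a*b) * (sqrt Q1 * sqrt Q2) * 2 <= a*a*Q2 + b*b*Q1).
  { assert (EE: a*a*Q2 + b*b*Q1 = a*a*(sqrt Q2*sqrt Q2) + b*b*(sqrt Q1*sqrt Q1)) by (rewrite H, H0; ring).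
    rewrite EE. set (s1 := sqrt Q1) in *. set (s2 := sqrt Q2) in *. clearbody s1 s2.
    destruct (Rle_dec 0 (a*b)).
    - rewrite Rabs_right by lra. simpl in E1. lra.
    - rewrite Rabs_left by lra. simpl in E2. lra. }
  nra.
Qed.

Lemma cs x y z : length x = length y -> length y = length z ->
  ipd x y z * ipd x y z <= sqd x y * sqd y z.
Proof.
  revert y z; induction x as [|a x IHx]; intros [|b y] [|c z]; simpl; intros; try lra; try discriminate.
  specialize (IHx y z ltac:(lia) ltac:(lia)).
  pose proof (sqd_ge0 x y); pose proof (sqd_ge0 y z).
  rewrite !Rmult_1_r.
  apply cs_step; auto.
Qed.

Lemma dist_tri x y z : length x = length y -> length y = length z ->
  dist x z <= dist x y + dist y z.
Proof.
  intros h1 h2. rewrite !dist_sqd.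
  pose proof (sqd_ge0 x y); pose proof (sqd_ge0 y z).
  pose proof (cs x y z h1 h2).
  assert (Hi: ipd x y z <= sqrt (sqd x y) * sqrt (sqd y z)).
  { rewrite <- sqrt_mult by auto.
    apply Rle_trans with (Rabs (ipd x y z)); [apply Rle_abs|].
    rewrite <- sqrt_Rsqr_abs. apply sqrt_le_1_alt. unfold Rsqr; lra. }
  rewrite (sqd_split x y z h1 h2).
  apply Rsqr_incr_0_var.
  - rewrite Rsqr_sqrt. unfold Rsqr. pose proof (sqrt_sqrt _ H). pose proof (sqrt_sqrt _ H0).
    set (s1 := sqrt (sqd x y)) in *. set (s2 := sqrt (sqd y z)) in *. clearbody s1 s2. nra.
    rewrite <- (sqd_split x y z h1 h2). apply sqd_ge0.
  - pose proof (sqrt_pos (sqd x y)); pose proof (sqrt_pos (sqd y z)); lra.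
Qed.


Fixpoint mid (a b : list R) : list R :=
  match a, b with x::a', y::b' => (x+y)/2 :: mid a' b' | _, _ => [] end.

Lemma mid_len a b : length a = length b -> length (mid a b) = length a.
Proof. revert b; induction a as [|x a IH]; intros [|y b]; simpl; intros; try lia. rewrite IH; lia. Qed.

Lemma sqd_mid_l a b : sqd a (mid a b) = sqd a b / 4.
Proof. revert b; induction a as [|x a IH]; intros [|y b]; simpl; try lra. rewrite IH; field. Qed.
Lemma sqd_mid_r a b : sqd b (mid a b) = sqd a b / 4.
Proof. revert b; induction a as [|x a IH]; intros [|y b]; simpl; try lra. rewrite IH; field. Qed.

Lemma sqrt_quarter s : 0 <= s -> sqrt (s / 4) = sqrt s / 2.
Proof.
  intros. unfold Rdiv. rewrite sqrt_mult by lra.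
  replace (/4) with ((/2)*(/2)) by field. rewrite sqrt_square by lra. reflexivity.
Qed.

Lemma disj_far d a b : in_Rd d a -> in_Rd d b ->
  ~ (exists y, ball d a 1 y /\ ball d b 1 y) -> 2 < Defs.dist a b.
Proof.
  intros ha hb hn. destruct (Rlt_dec 2 (Defs.dist a b)) as [h|h]; auto.
  exfalso; apply hn. exists (mid a b).
  unfold ball, in_Rd in *. pose proof (sqd_ge0 a b).
  rewrite !dist_sqd in *. rewrite sqd_mid_l, sqd_mid_r, sqrt_quarter by auto.
  rewrite mid_len by lia. repeat split; try lra; lia.
Qed.

Lemma sqd_close h u v : length u = length v ->
  Forall2 (fun a b => Rabs (a - b) <= h) u v -> sqd u v <= INR (length u) * (h*h).
Proof.
  intros _ F. induction F; simpl. lra.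
  destruct (length l) eqn:E; simpl in *.
  - pose proof (Rabs_pos (x-y)). assert ((x-y)*((x-y)*1) = Rabs (x-y) * Rabs (x-y)).
    { rewrite Rmult_1_r, <- Rabs_mult, Rabs_right; auto. apply Rle_ge, Rle_0_sqr. }
    nra.
  - pose proof (Rabs_pos (x-y)). assert ((x-y)*((x-y)*1) = Rabs (x-y) * Rabs (x-y)).
    { rewrite Rmult_1_r, <- Rabs_mult, Rabs_right; auto. apply Rle_ge, Rle_0_sqr. }
    nra.
Qed.

Lemma dist_close h u v : 0 <= h -> length u = length v ->
  Forall2 (fun a b => Rabs (a - b) <= h) u v -> Defs.dist u v <= sqrt (INR (length u)) * h.
Proof.
  intros hh hl F. rewrite dist_sqd. rewrite <- (sqrt_square h) by auto.
  rewrite <- sqrt_mult by (try apply pos_INR; nra).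
  apply sqrt_le_1_alt. apply sqd_close; auto.
Qed.

Fixpoint l1 (x y : list R) : R :=
  match x, y with a::x', b::y' => Rabs (a-b) + l1 x' y' | _, _ => 0 end.

Lemma l1_ge0 x y : 0 <= l1 x y.
Proof. revert y; induction x as [|a x IH]; intros [|b y]; simpl; try lra. pose proof (Rabs_pos (a-b)); pose proof (IH y); lra. Qed.

Lemma l1_sq x y : length x = length y -> l1 x y * l1 x y <= INR (length x) * sqd x y.
Proof.
  revert y; induction x as [|a x IH]; intros [|b y]; simpl; intros hl; try lra; try discriminate.
  specialize (IH y ltac:(lia)). pose proof (l1_ge0 x y). pose proof (sqd_ge0 x y).
  assert (HN: INR (S (length x)) = INR (length x) + 1) by (apply S_INR). simpl in HN. rewrite HN. clear HN.
  set (s := l1 x y) in *. set (Q := sqd x y) in *. set (n := INR (length x)) in *.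
  assert (hn : 0 <= n) by apply pos_INR.
  assert (E: (a-b)*((a-b)*1) = Rabs (a-b) * Rabs (a-b)).
  { rewrite Rmult_1_r, <- Rabs_mult, Rabs_right; auto. apply Rle_ge, Rle_0_sqr. }
  rewrite E. pose proof (Rabs_pos (a-b)). set (t := Rabs (a-b)) in *.
 clearbody s Q n t.
  assert (K: 2*t*s <= n*(t*t) + Q).
  { destruct (Rle_lt_dec n 0).
    - assert (n = 0) by lra. subst n. assert (s*s <= 0) by lra. assert (s = 0) by nra. subst. nra.
    - assert (0 <= (n*t - s)*(n*t-s)) by apply Rle_0_sqr.
      apply (Rmult_le_reg_l n); auto. nra. }
  nra.
Qed.


Definition rnd (t : R) : Z := up (t - /2).
Lemma rnd_spec t : t - /2 < IZR (rnd t) <= t + /2.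
Proof. unfold rnd. destruct (archimed (t - /2)). lra. Qed.

Fixpoint rndv (h : R) (x c : list R) : list Z :=
  match x, c with a::x', b::c' => rnd ((a-b)/h) :: rndv h x' c' | _, _ => [] end.

Lemma rndv_len h x c : length x = length c -> length (rndv h x c) = length x.
Proof. revert c; induction x as [|a x IH]; intros [|b c]; simpl; intros; try lia. rewrite IH; lia. Qed.

Lemma rndv_close h x x0 c : 0 < h -> length x = length c -> length x0 = length c ->
  rndv h x c = rndv h x0 c -> Forall2 (fun a b => Rabs (a - b) <= h) x x0.
Proof.
  intros hh. revert x0 c; induction x as [|a x IH]; intros [|a0 x0] [|b c]; simpl; intros h1 h2 he;
   try discriminate; try constructor.
  - injection he as e1 e2.
    pose proof (rnd_spec ((a-b)/h)). pose proof (rnd_spec ((a0-b)/h)). rewrite e1 in *.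
    assert (Rabs ((a-b)/h - (a0-b)/h) <= 1) by (apply Rabs_le; split; lra).
    replace ((a-b)/h - (a0-b)/h) with ((a-a0)/h) in H1 by (field; lra).
    unfold Rdiv in H1. rewrite Rabs_mult, Rabs_inv, (Rabs_right h) in H1 by lra.
    replace (Rabs (a-a0)) with ((Rabs (a-a0) * /h) * h) by (field; lra).
    apply Rle_trans with (1*h); [apply Rmult_le_compat_r; lra | lra].
  - injection he as _ e2. apply (IH x0 c); auto; lia.
Qed.

Fixpoint sumabs (y : list Z) : nat :=
  match y with [] => 0%nat | z::y' => (Z.abs_nat z + sumabs y')%nat end.

Lemma INR_absnat z : INR (Z.abs_nat z) = Rabs (IZR z).
Proof. rewrite INR_IZR_INZ, Nat2Z.inj_abs_nat, abs_IZR. reflexivity. Qed.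

Lemma sumabs_bound h x c : 0 < h -> length x = length c ->
  INR (sumabs (rndv h x c)) <= l1 x c / h + INR (length x) / 2.
Proof.
  intros hh. revert c; induction x as [|a x IH]; intros [|b c]; simpl; intros hl; try discriminate.
  - lra.
  - specialize (IH c ltac:(lia)). rewrite plus_INR, INR_absnat.
    pose proof (rnd_spec ((a-b)/h)).
    assert (Rabs (IZR (rnd ((a-b)/h))) <= Rabs (a-b)/h + /2).
    { replace (Rabs (a-b)/h) with (Rabs ((a-b)/h)).
      - apply Rabs_le. pose proof (Rle_abs ((a-b)/h)). pose proof (Rle_abs (-((a-b)/h))).
        rewrite Rabs_Ropp in *. split; lra.
      - unfold Rdiv. rewrite Rabs_mult, Rabs_inv, (Rabs_right h) by lra. auto. }
    assert (HN: INR (S (length x)) = INR (length x) + 1) by (apply S_INR). simpl in HN. rewrite HN.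
    assert (E: (Rabs (a-b) + l1 x c)/h = Rabs (a-b)/h + l1 x c / h) by (field; lra).
    rewrite E. lra.
Qed.

Fixpoint zr (L : nat) : list Z :=
  match L with 0%nat => [0%Z] | S L' => Z.of_nat L :: (- Z.of_nat L)%Z :: zr L' end.

Lemma zr_in z L : (Z.abs_nat z <= L)%nat -> In z (zr L).
Proof.
  induction L; intros h; simpl.
  - left. lia.
  - destruct (Nat.eq_dec (Z.abs_nat z) (S L)).
    + destruct (Z_le_gt_dec 0 z); [left|right;left]; lia.
    + right; right; apply IHL; lia.
Qed.

Fixpoint vecs (d L : nat) : list (list Z) :=
  match d with
  | 0%nat => [[]]
  | S d' => flat_map (fun j => map (cons j) (vecs d' (L - Z.abs_nat j))) (zr L)
  end.

Lemma vecs_in d : forall y L, length y = d -> (sumabs y <= L)%nat -> In y (vecs d L).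
Proof.
  induction d; intros [|z y] L hl hs; simpl in *; try discriminate.
  - left; auto.
  - apply in_flat_map. exists z. split.
    + apply zr_in; lia.
    + apply in_map. apply IHd; lia.
Qed.

Lemma zr_sum L L' : (L <= L')%nat ->
  (list_sum (map (fun j => 2 ^ (L' - Z.abs_nat j)) (zr L)) + 2 * 2 ^ (L' - L) <= 3 * 2 ^ L')%nat.
Proof.
  induction L; intros h; simpl.
  - rewrite Nat.sub_0_r. lia.
  - rewrite SuccNat2Pos.id_succ.
    specialize (IHL ltac:(lia)).
    replace (L' - L)%nat with (S (L' - S L)) in IHL by lia. simpl in IHL. lia.
Qed.

Lemma list_sum_le (A : Type) (f g : A -> nat) l : (forall x, In x l -> f x <= g x)%nat ->
  (list_sum (map f l) <= list_sum (map g l))%nat.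
Proof. induction l; simpl; intros; auto. specialize (IHl (fun x hx => H x (or_intror hx))). specialize (H a (or_introl eq_refl)). lia. Qed.

Lemma list_sum_mul (A : Type) (f : A -> nat) l (c : nat) :
  list_sum (map (fun x => (c * f x)%nat) l) = (c * list_sum (map f l))%nat.
Proof. induction l; simpl; lia. Qed.

Lemma vecs_len d : forall L, (length (vecs d L) <= 3 ^ d * 2 ^ L)%nat.
Proof.
  induction d; intros L; simpl.
  - assert (0 < 2^L)%nat by (apply Nat.neq_0_lt_0, Nat.pow_nonzero; lia). lia.
  - rewrite length_flat_map.
    eapply Nat.le_trans.
    + apply (list_sum_le _ _ (fun j => 3 ^ d * 2 ^ (L - Z.abs_nat j))%nat).
      intros j _. rewrite length_map. apply IHd.
    + rewrite list_sum_mul. pose proof (zr_sum L L (le_n _)). nia.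
Qed.


Definition bR {P : Prop} (H : {P} + {~P}) : bool := if H then true else false.

Lemma bR_true {P : Prop} (H : {P} + {~P}) : bR H = true <-> P.
Proof. unfold bR; destruct H; split; intros; auto; try discriminate; contradiction. Qed.

Lemma filter_mono (A : Type) (f g : A -> bool) L :
  (forall x, In x L -> f x = true -> g x = true) ->
  (length (filter f L) <= length (filter g L))%nat.
Proof.
  induction L as [|a L IH]; simpl; intros H; auto.
  assert (IH' := IH (fun x hx => H x (or_intror hx))).
  specialize (H a (or_introl eq_refl)).
  destruct (f a) eqn:E1, (g a) eqn:E2; simpl; try lia. all: discriminate (H eq_refl).
Qed.

Lemma filter_filter_le (A : Type) (f g : A -> bool) L :
  (length (filter f (filter g L)) <= length (filter f L))%nat.
Proof.
  induction L as [|a L IH]; simpl; auto.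
  destruct (g a), (f a) eqn:E; simpl; try rewrite E; simpl; lia.
Qed.

Lemma incl_filter_length (A : Type) (f : A -> bool) S L :
  NoDup S -> incl S L -> (forall x, In x S -> f x = true) ->
  (length S <= length (filter f L))%nat.
Proof.
  intros nd inc hf. apply NoDup_incl_length; auto.
  intros x hx. apply filter_In. split; auto.
Qed.

Lemma fiber_bound (A B : Type) (eqB : forall x y : B, {x = y} + {x <> y})
  (f : A -> B) (b : nat) (Y : list B) : forall S : list A,
  (forall y, (length (filter (fun x => bR (eqB (f x) y)) S) <= b)%nat) ->
  (forall x, In x S -> In (f x) Y) ->
  (length S <= length Y * b)%nat.
Proof.
  induction Y as [|y Y IH]; intros S hb hin; simpl.
  - destruct S as [|x S]; simpl; auto. destruct (hin x (or_introl eq_refl)).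
  - rewrite <- (filter_length (fun x => bR (eqB (f x) y)) S).
    pose proof (hb y) as hby.
    assert (length (filter (fun x => negb (bR (eqB (f x) y))) S) <= length Y * b)%nat.
    { apply IH.
      - intros y'. eapply Nat.le_trans; [apply filter_filter_le|apply hb].
      - intros x hx. apply filter_In in hx. destruct hx as [hx hn].
        destruct (hin x hx); auto. subst. unfold bR in hn. destruct (eqB (f x) (f x)); simpl in hn; congruence. }
    lia.
Qed.

Lemma argmax (A : Type) (g : A -> R) (L : list A) (a : A) : In a L ->
  exists x, In x L /\ forall y, In y L -> g y <= g x.
Proof.
  revert a; induction L as [|b L IH]; intros a ha; [destruct ha|].
  destruct L as [|c L'].
  - exists b; split; [left; auto|]. intros y [<-|[]]; lra.
  - destruct (IH c (or_introl eq_refl)) as [x [hx hm]].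
    destruct (Rle_dec (g b) (g x)).
    + exists x; split; [right; auto|]. intros y [<-|hy]; auto.
    + exists b; split; [left; auto|]. intros y [<-|hy]; [lra|]. specialize (hm y hy); lra.
Qed.

Lemma argmin (A : Type) (g : A -> R) (L : list A) (a : A) : In a L ->
  exists x, In x L /\ forall y, In y L -> g x <= g y.
Proof.
  intros ha. destruct (argmax A (fun x => - g x) L a ha) as [x [hx hm]].
  exists x; split; auto. intros y hy; specialize (hm y hy); lra.
Qed.

Lemma argmin_nat (A : Type) (g : A -> nat) (L : list A) (a : A) : In a L ->
  exists x, In x L /\ forall y, In y L -> (g x <= g y)%nat.
Proof.
  intros ha. destruct (argmin A (fun x => INR (g x)) L a ha) as [x [hx hm]].
  exists x; split; auto. intros y hy; apply INR_le; auto.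
Qed.

Definition sep (N : list (list R)) := forall p q, In p N -> In q N -> p <> q -> 2 <= Defs.dist p q.

Fixpoint greedy (N L : list (list R)) : list (list R) :=
  match L with
  | [] => N
  | p :: L' => greedy (if forallb (fun q => bR (Rle_dec 2 (Defs.dist p q))) N then p :: N else N) L'
  end.

Lemma greedy_spec L : forall N, sep N ->
  sep (greedy N L) /\ incl N (greedy N L) /\ incl (greedy N L) (N ++ L) /\
  (forall p, In p L -> exists q, In q (greedy N L) /\ Defs.dist p q <= 2).
Proof.
  induction L as [|p L IH]; intros N hs; simpl.
  - split; auto. split; [apply incl_refl|]. split; [rewrite app_nil_r; apply incl_refl|]. intros _ [].
  - destruct (forallb (fun q => bR (Rle_dec 2 (Defs.dist p q))) N) eqn:E.
    + rewrite forallb_forall in E.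
      assert (hs' : sep (p :: N)).
      { intros a b [<-|ha] [<-|hb] hne; try congruence.
        - eapply (proj1 (bR_true _)). apply E; auto.
        - rewrite dist_sym. eapply (proj1 (bR_true _)). apply E; auto.
        - apply hs; auto. }
      destruct (IH (p :: N) hs') as [h1 [h2 [h3 h4]]].
      split; auto. split; [intros x hx; apply h2; right; auto|].
      split.
      * intros x hx. specialize (h3 x hx). apply in_app_or in h3. apply in_or_app.
        destruct h3 as [[<-|h]|h]; [right; left; auto|left; auto|right; right; auto].
      * intros q [<-|hq]; auto. exists p. split; [apply h2; left; auto|]. rewrite dist_refl; lra.
    + destruct (IH N hs) as [h1 [h2 [h3 h4]]].
      split; auto. split; auto. split.
      * intros x hx. specialize (h3 x hx). apply in_app_or in h3. apply in_or_app.
        destruct h3 as [h|h]; [left; auto|right; right; auto].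
      * intros q [<-|hq]; auto.
        apply Bool.not_true_iff_false in E. rewrite forallb_forall in E.
        destruct (classic (exists y, In y N /\ Defs.dist p y <= 2)) as [[y [hy hd]]|hn].
        { exists y; split; auto. }
        exfalso. apply E. intros y hy. apply (proj2 (bR_true _)).
        destruct (Rle_dec 2 (Defs.dist p y)); auto. exfalso; apply hn; exists y; split; auto; lra.
Qed.

Lemma net_exists (Dp P : list (list R)) : incl Dp P -> sep Dp ->
  exists N, is_net 2 N P /\ incl Dp N.
Proof.
  intros hi hs. destruct (greedy_spec P Dp hs) as [h1 [h2 [h3 h4]]].
  exists (greedy Dp P). split; auto. split; [|split].
  - intros x hx. specialize (h3 x hx). apply in_app_or in h3. destruct h3; auto.
  - intros p q hp hq hne. apply h1; auto.
  - intros p hp. auto.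
Qed.


Lemma list_sum_split (A : Type) (f g : A -> nat) l :
  list_sum (map (fun x => (f x + g x)%nat) l) = (list_sum (map f l) + list_sum (map g l))%nat.
Proof. induction l; simpl; lia. Qed.

Lemma sum_ind_le1 (A : Type) (p : nat -> A -> bool) x js :
  NoDup js -> (forall i j, In i js -> In j js -> p i x = true -> p j x = true -> i = j) ->
  (list_sum (map (fun j => if p j x then 1 else 0) js) <= 1)%nat.
Proof.
  induction js as [|j js IH]; simpl; intros nd ex; [lia|].
  inversion nd; subst.
  destruct (p j x) eqn:E.
  - assert (list_sum (map (fun j => if p j x then 1 else 0) js) = 0)%nat.
    { clear IH. assert (forall i, In i js -> p i x = false).
      { intros i hi. destruct (p i x) eqn:E2; auto. exfalso.
        assert (i = j) by (apply ex; auto; right; auto). subst; auto. }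
      clear -H. induction js as [|a js IHjs]; simpl; [reflexivity|]. rewrite H by (left; auto). simpl. apply IHjs. intros; apply H; right; auto. }
    lia.
  - simpl. apply IH; [auto|]. intros; apply ex; auto; right; auto.
Qed.

Lemma sum_excl (A : Type) (p : nat -> A -> bool) (big : A -> bool) (js : list nat) L :
  NoDup js ->
  (forall i j x, In i js -> In j js -> p i x = true -> p j x = true -> i = j) ->
  (forall j x, In j js -> p j x = true -> big x = true) ->
  (list_sum (map (fun j => length (filter (p j) L)) js) <= length (filter big L))%nat.
Proof.
  intros nd ex hb. induction L as [|x L IH]; simpl.
  - clear. induction js; simpl; lia.
  - transitivity (list_sum (map (fun j => ((if p j x then 1 else 0) + length (filter (p j) L))%nat) js)).
    + apply Nat.eq_le_incl. f_equal. apply map_ext. intros j. destruct (p j x); simpl; lia.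
    + rewrite list_sum_split.
      pose proof (sum_ind_le1 A p x js nd (fun i j hi hj => ex i j x hi hj)).
      destruct (big x) eqn:E.
      * simpl. lia.
      * assert (list_sum (map (fun j => if p j x then 1 else 0) js) = 0)%nat.
        { assert (forall j, In j js -> p j x = false).
          { intros j hj. destruct (p j x) eqn:E2; auto. rewrite (hb j x hj E2) in E; discriminate. }
          clear -H0. induction js as [|a js IHjs]; simpl; [reflexivity|]. rewrite H0 by (left; auto). simpl. apply IHjs. intros; apply H0; right; auto. }
        lia.
Qed.

Lemma sum_lower (A : Type) (f : A -> nat) c l : (forall i, In i l -> (c <= f i)%nat) ->
  (length l * c <= list_sum (map f l))%nat.
Proof. induction l; simpl; intros H; [lia|]. specialize (IHl (fun i hi => H i (or_intror hi))). specialize (H a (or_introl eq_refl)). lia. Qed.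

Lemma nat_floor x : 0 <= x -> exists n : nat, INR n <= x < INR n + 1.
Proof.
  intros hx. destruct (archimed x) as [h1 h2].
  assert (hz : (0 <= up x - 1)%Z).
  { apply le_IZR. rewrite minus_IZR. simpl. assert (IZR (up x) > 0) by lra.
    assert (0 < up x)%Z by (apply lt_IZR; lra). assert (1 <= up x)%Z by lia. apply IZR_le in H1. simpl in H1. lra. }
  exists (Z.to_nat (up x - 1)). rewrite INR_IZR_INZ, Z2Nat.id by auto. rewrite minus_IZR. simpl.
  destruct (Req_dec (IZR (up x) - x) 1).
  - split; lra.
  - split; lra.
Qed.


Definition cb (Dp : list (list R)) (q : list R) (rho : R) : nat :=
  length (filter (fun x => bR (Rle_dec (Defs.dist q x) rho)) Dp).

Lemma filter_all (A : Type) (f : A -> bool) L : NoDup L -> (forall x, In x L -> f x = true) ->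
  length (filter f L) = length L.
Proof.
  intros nd h. apply Nat.le_antisymm; [apply filter_length_le|]. apply incl_filter_length; auto. apply incl_refl.
Qed.

Lemma exists_other (A : Type) (L : list A) q : NoDup L -> (2 <= length L)%nat -> exists x, In x L /\ x <> q.
Proof.
  intros nd hl. destruct L as [|a [|b L]]; simpl in hl; try lia.
  inversion nd; subst. destruct (classic (a = q)).
  - exists b; split; [right; left; auto|]. intros <-. apply H1; left; auto.
  - exists a; split; [left; auto|auto].
Qed.

Lemma min_radius (Dp : list (list R)) (m : nat) :
  NoDup Dp -> (2 <= m)%nat -> (m <= length Dp)%nat ->
  (forall a b, In a Dp -> In b Dp -> a <> b -> 2 < Defs.dist a b) ->
  exists q R, In q Dp /\ (m <= cb Dp q R)%nat /\ 2 < R /\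
    forall q1 rho, In q1 Dp -> rho < R -> (cb Dp q1 rho < m)%nat.
Proof.
  intros nd hm hk far.
  set (cands := filter (fun pq => Nat.leb m (cb Dp (fst pq) (Defs.dist (fst pq) (snd pq)))) (list_prod Dp Dp)).
  assert (exists a0, In a0 Dp) as [a0 ha0]
    by (destruct Dp as [|a Dr]; [simpl in hk; lia| exists a; left; auto]).
  destruct (argmax _ (fun y => Defs.dist a0 y) Dp a0 ha0) as [q' [hq' hmax]].
  assert (hc : In (a0, q') cands).
  { apply filter_In. split. apply in_prod; auto.
    apply Nat.leb_le. simpl. unfold cb. rewrite filter_all; auto.
    intros x hx. apply (proj2 (bR_true _)). apply hmax; auto. }
  destruct (argmin _ (fun pq => Defs.dist (fst pq) (snd pq)) cands _ hc) as [[q q2] [hin hmin]].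
  apply filter_In in hin. destruct hin as [hin hle]. apply in_prod_iff in hin. destruct hin as [hq hq2].
  apply Nat.leb_le in hle. simpl in hle.
  exists q, (Defs.dist q q2). split; auto. split; auto. split.
  - unfold cb in hle.
    destruct (exists_other _ (filter (fun x => bR (Rle_dec (Defs.dist q x) (Defs.dist q q2))) Dp) q)
      as [x [hx hne]]; [apply NoDup_filter; auto| lia|].
    apply filter_In in hx. destruct hx as [hx hd]. apply bR_true in hd.
    specialize (far q x hq hx (not_eq_sym hne)). lra.
  - intros q1 rho hq1 hrho. destruct (Nat.lt_ge_cases (cb Dp q1 rho) m) as [h|h]; auto.
    exfalso. unfold cb in h.
    set (F := filter (fun x => bR (Rle_dec (Defs.dist q1 x) rho)) Dp) in *.
    assert (exists f0, In f0 F) as [f0 hf0]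
      by (destruct F as [|a Fr]; [simpl in h; lia| exists a; left; auto]).
    destruct (argmax _ (fun y => Defs.dist q1 y) F f0 hf0) as [q3 [hq3 hm3]].
    assert (hq3' := hq3). unfold F in hq3'. apply filter_In in hq3'. destruct hq3' as [hq3D hq3r].
    apply bR_true in hq3r.
    assert (hc3 : In (q1, q3) cands).
    { apply filter_In. split. apply in_prod; auto. apply Nat.leb_le. simpl.
      eapply Nat.le_trans; [apply h|]. unfold cb. apply filter_mono.
      intros x hx hfx. apply (proj2 (bR_true _)). apply hm3. unfold F. apply filter_In; auto. }
    specialize (hmin _ hc3). simpl in hmin. lra.
Qed.


Lemma cover (d : nat) (Dp : list (list R)) (q : list R) (R0 : R) (m : nat) :
  (1 <= d)%nat -> NoDup Dp -> (forall x, In x Dp -> in_Rd d x) -> In q Dp -> 0 < R0 ->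
  (forall q1 rho, In q1 Dp -> rho < R0 -> (cb Dp q1 rho < m)%nat) ->
  (length (filter (fun x => bR (Rle_dec (Defs.dist q x) (2*R0))) Dp) <= length (vecs d (5*d)) * (m - 1))%nat.
Proof.
  intros hd nd hdim hq hR hmin.
  set (s := sqrt (INR d)).
  assert (hs : 0 < s) by (apply sqrt_lt_R0; apply lt_0_INR; lia).
  assert (hss : s * s = INR d) by (apply sqrt_sqrt; apply pos_INR).
  set (h := R0 / (2 * s)).
  assert (hh : 0 < h) by (unfold h; apply Rdiv_lt_0_compat; lra).
  set (Big := filter (fun x => bR (Rle_dec (Defs.dist q x) (2*R0))) Dp).
  apply (fiber_bound _ _ (list_eq_dec Z.eq_dec) (fun x => rndv h x q)).
  - intros y. set (F := filter _ Big).
    destruct F as [|x0 Fr] eqn:EF; [simpl; lia|].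
    assert (hx0 : In x0 F) by (rewrite EF; left; auto).
    rewrite <- EF.
    assert (ndF : NoDup F) by (apply NoDup_filter, NoDup_filter; auto).
    assert (inF : forall x, In x F -> In x Dp /\ rndv h x q = y).
    { intros x hx. unfold F, Big in hx. apply filter_In in hx. destruct hx as [hx hy].
      apply filter_In in hx. destruct hx as [hx _]. split; auto.
      unfold bR in hy. destruct (list_eq_dec Z.eq_dec (rndv h x q) y); auto; discriminate. }
    destruct (inF x0 hx0) as [hx0D hx0y].
    assert (length F <= cb Dp x0 (R0/2))%nat.
    { unfold cb. apply incl_filter_length; auto.
      - intros x hx; apply inF; auto.
      - intros x hx. apply (proj2 (bR_true _)). destruct (inF x hx) as [hxD hxy].
        assert (hc : Forall2 (fun a b => Rabs (a - b) <= h) x0 x).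
        { apply (rndv_close h x0 x q); auto.
          - rewrite (hdim x0 hx0D), (hdim q hq); auto.
          - rewrite (hdim x hxD), (hdim q hq); auto.
          - congruence. }
        eapply Rle_trans; [apply dist_close; [left; exact hh| |exact hc]|].
        + rewrite (hdim x0 hx0D), (hdim x hxD); auto.
        + rewrite (hdim x0 hx0D). fold s. unfold h. apply Req_le. field. lra. }
    specialize (hmin x0 (R0/2) hx0D ltac:(lra)). lia.
  - intros x hx. unfold Big in hx. apply filter_In in hx. destruct hx as [hxD hxr].
    apply bR_true in hxr.
    assert (lx : length x = d) by (apply hdim; auto).
    assert (lq : length q = d) by (apply hdim; auto).
    apply vecs_in.
    + rewrite rndv_len; lia.
    + apply INR_le.
      eapply Rle_trans; [apply sumabs_bound; auto; lia|].
      assert (hl1 : l1 x q <= s * Defs.dist q x).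
      { rewrite dist_sym, dist_sqd. pose proof (l1_sq x q ltac:(lia)). pose proof (l1_ge0 x q).
        pose proof (sqd_ge0 x q). rewrite lx in H. unfold s.
        rewrite <- sqrt_mult by (try apply pos_INR; auto).
        rewrite <- (sqrt_square (l1 x q)) by auto. apply sqrt_le_1_alt. lra. }
      assert (l1 x q / h <= 4 * INR d).
      { unfold h. unfold Rdiv. rewrite Rinv_mult, Rinv_inv.
        apply Rle_trans with (s * (2*R0) * (/R0 * (2*s))).
        - apply Rmult_le_compat_r. apply Rmult_le_pos. left; apply Rinv_0_lt_compat; lra. lra.
          eapply Rle_trans; [apply hl1|]. apply Rmult_le_compat_l; lra.
        - replace (s * (2 * R0) * (/ R0 * (2 * s))) with (4 * (s*s)) by (field; lra). lra. }
      rewrite lx. rewrite mult_INR. simpl (INR 5). pose proof (pos_INR d). lra.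
Qed.


Definition CHf (d : nat) (delta c0 : R) : R :=
  INR (2^(8*d)) + 6 * Rabs c0 + 6 * Rpower (INR (2^(8*d)) * Rabs c0 + 1) (/ delta) + 1.

Lemma Rpower_pos x y : 0 < Rpower x y.
Proof. unfold Rpower; apply exp_pos. Qed.

Lemma nat_facts d : (1 <= d)%nat ->
  (2 <= 2^(8*d))%nat /\ (length (vecs d (5*d)) + 1 <= 2^(8*d))%nat.
Proof.
  intros hd.
  assert (h1 : (3^d * 2^(5*d) <= 2^(7*d))%nat).
  { replace (7*d)%nat with (2*d + 5*d)%nat by lia. rewrite Nat.pow_add_r.
    apply Nat.mul_le_mono_r. rewrite Nat.pow_mul_r. apply Nat.pow_le_mono_l. simpl; lia. }
  assert (h2 : (2 * 2^(7*d) <= 2^(8*d))%nat).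
  { replace (2 * 2^(7*d))%nat with (2^(1 + 7*d))%nat by (rewrite Nat.pow_add_r; simpl; lia).
    apply Nat.pow_le_mono_r; lia. }
  assert (h3 : (1 <= 2^(7*d))%nat) by (apply Nat.neq_0_lt_0, Nat.pow_nonzero; lia).
  pose proof (vecs_len d (5*d)). lia.
Qed.

Lemma main_large d delta c0 P Dp :
  (2 <= d)%nat -> 0 < delta ->
  (forall p, In p P -> in_Rd d p) -> frac_bound d delta c0 P ->
  NoDup Dp -> incl Dp P ->
  (forall a b, In a Dp -> In b Dp -> a <> b -> 2 < Defs.dist a b) ->
  (2^(8*d) < length Dp)%nat ->
  exists c r, in_Rd d c /\ 0 < r /\
   at_most Dp (ball_meets_sphere d c r) (H_bound (CHf d delta c0) delta (INR (length Dp))) /\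
   at_most Dp (ball_inside d c r) ((1 - / INR (2^(8*d))) * INR (length Dp)) /\
   at_most Dp (ball_outside d c r) ((1 - / INR (2^(8*d))) * INR (length Dp)).
Proof.
  intros hd hdel hP hfb nd inc far hk.
  destruct (nat_facts d ltac:(lia)) as [hM hY].
  set (M := (2^(8*d))%nat) in *. set (k := length Dp) in *.
  set (K := (k / M)%nat).
  assert (hMK : (M * K <= k)%nat) by apply Nat.Div0.mul_div_le.
  assert (hMK2 : (k < M * (K + 1))%nat).
  { pose proof (Nat.div_mod_eq k M). pose proof (Nat.mod_upper_bound k M ltac:(lia)). unfold K. nia. }
  assert (hK1 : (1 <= K)%nat) by nia.
  set (m := (K + 1)%nat).
  assert (hm2 : (2 <= m)%nat) by lia.
  assert (hmk : (m <= k)%nat) by nia.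
  assert (hdim : forall x, In x Dp -> in_Rd d x) by (intros; apply hP, inc; auto).
  destruct (min_radius Dp m nd hm2 hmk far) as [q [R0 [hq [hcb [hR hmin]]]]].
  assert (hB := cover d Dp q R0 m ltac:(lia) nd hdim hq ltac:(lra) hmin).
  set (bigf := fun x => bR (Rle_dec (Defs.dist q x) (2*R0))) in *.
  set (B := length (filter bigf Dp)) in *.
  destruct (nat_floor ((R0+1)/3)) as [J [hJ1 hJ2]]; [lra|].
  assert (hJ0 : (1 <= J)%nat).
  { destruct J; [simpl in hJ2; lra|lia]. }
  assert (hJR : R0 <= 6 * INR J).
  { apply le_INR in hJ0. simpl in hJ0. destruct (Rle_dec R0 6); lra. }
  set (rr := fun j : nat => R0 + 1 + 3 * INR j).
  set (pj := fun (j : nat) x => bR (Rle_dec (Rabs (Defs.dist q x - rr j)) 1)).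
  assert (hsum : (list_sum (map (fun j => length (filter (pj j) Dp)) (seq 0 J)) <= B)%nat).
  { apply sum_excl.
    - apply seq_NoDup.
    - intros i j x hi hj hpi hpj. unfold pj in *. apply bR_true in hpi. apply bR_true in hpj.
      assert (Rabs (rr i - rr j) <= 2).
      { replace (rr i - rr j) with ((Defs.dist q x - rr j) - (Defs.dist q x - rr i)) by ring.
        eapply Rle_trans; [apply Rabs_triang|]. rewrite Rabs_Ropp. lra. }
      unfold rr in H. replace (R0 + 1 + 3 * INR i - (R0 + 1 + 3 * INR j)) with (3 * (INR i - INR j)) in H by ring.
      rewrite Rabs_mult, (Rabs_right 3) in H by lra.
      destruct (Nat.lt_total i j) as [h|[h|h]]; auto; exfalso.
      + apply le_INR in h. rewrite S_INR in h. rewrite Rabs_left1 in H by lra. lra.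
      + apply le_INR in h. rewrite S_INR in h. rewrite Rabs_right in H by lra. lra.
    - intros j x hj hp. unfold pj in hp. apply bR_true in hp. apply in_seq in hj.
      unfold bigf. apply (proj2 (bR_true _)).
      assert (INR j + 1 <= INR J) by (rewrite <- S_INR; apply le_INR; lia).
      pose proof (Rle_abs (Defs.dist q x - rr j)). unfold rr in *. lra. }
  assert (h0J : In 0%nat (seq 0 J)) by (apply in_seq; lia).
  destruct (argmin_nat _ (fun j => length (filter (pj j) Dp)) (seq 0 J) 0%nat h0J) as [j [hj hjmin]].
  set (cnt := length (filter (pj j) Dp)) in *.
  assert (hJc : (J * cnt <= B)%nat).
  { pose proof (sum_lower _ (fun j => length (filter (pj j) Dp)) cnt (seq 0 J) hjmin).
    rewrite length_seq in H. lia. }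
  assert (hjJ : INR j + 1 <= INR J) by (apply in_seq in hj; rewrite <- S_INR; apply le_INR; lia).
  assert (hq' : in_Rd d q) by auto.
  assert (hsep : sep Dp) by (intros a b ha hb hne; left; apply far; auto).
  destruct (net_exists Dp P inc hsep) as [N [hN hDN]].
  assert (INRM : INR M = 2^(8*d)) by (unfold M; rewrite pow_INR; simpl; auto).
  assert (hMpos : 2 <= INR M) by (apply le_INR in hM; simpl in hM; lra).
  exists q, (rr j). split; auto. split; [unfold rr; pose proof (pos_INR j); lra|].
  split; [|split].
  -
    intros S ndS incS hS.
    assert (hSc : (length S <= cnt)%nat).
    { apply incl_filter_length; auto. intros a ha. unfold pj. apply (proj2 (bR_true _)).
      destruct (hS a ha) as [y [[hy1 hy2] [hy3 hy4]]].
      assert (la : in_Rd d a) by (apply hdim, incS; auto).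
      unfold in_Rd in *.
      assert (t1 := dist_tri q y a ltac:(lia) ltac:(lia)).
      assert (t2 := dist_tri q a y ltac:(lia) ltac:(lia)).
      rewrite (dist_sym y a) in t1. apply Rabs_le. split; lra. }
    apply le_INR in hSc. apply le_INR in hJc. rewrite mult_INR in hJc.
    assert (hcnt0 : 0 <= INR cnt) by apply pos_INR.
    assert (hB0 : INR B <= INR k) by (apply le_INR; apply filter_length_le).
    eapply Rle_trans; [exact hSc|].
    unfold H_bound, CHf. destruct (Rlt_dec 1 delta) as [hd1|hd1].
    +
      set (R' := Rmax R0 4).
      assert (hR'1 : 4 <= R') by apply Rmax_r.
      assert (hR'2 : R' / 2 <= R0) by (unfold R'; apply Rmax_case_strong; intros; lra).
      assert (hF : INR (cb Dp q R0) <= c0 * Rpower (R' / 2) delta).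
      { apply (hfb 2 R' N q ltac:(lra) ltac:(lra) hN hq').
        - apply NoDup_filter; auto.
        - intros x hx. apply filter_In in hx. apply hDN; tauto.
        - intros x hx. apply filter_In in hx. destruct hx as [hx hr]. apply bR_true in hr.
          split; auto. unfold R'. pose proof (Rmax_l R0 4). lra. }
      apply le_INR in hcb.
      assert (hkm : INR k < INR M * INR m).
      { rewrite <- mult_INR. apply lt_INR. unfold m. lia. }
      set (X := Rpower (R'/2) delta) in *. assert (hX : 0 < X) by apply Rpower_pos.
      set (A0 := INR M * Rabs c0 + 1).
      assert (hk0 : 0 < INR k) by (apply lt_0_INR; lia).
      assert (hkA : INR k <= A0 * X).
      { assert (c0 * X <= Rabs c0 * X) by (apply Rmult_le_compat_r; [lra|apply Rle_abs]).
        unfold A0. nra. }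
      assert (hV : Rpower (INR k) (/delta) <= Rpower A0 (/delta) * (R'/2)).
      { eapply Rle_trans.
        - apply Rle_Rpower_l; [left; apply Rinv_0_lt_compat; lra| split; [lra|exact hkA]].
        - rewrite <- Rpower_mult_distr by (unfold A0; try pose proof (Rabs_pos c0); try nra).
          unfold X. rewrite Rpower_mult. replace (delta * / delta) with 1 by (field; lra).
          rewrite Rpower_1 by lra. lra. }
      assert (hkWV : INR k = Rpower (INR k) (1 - 1/delta) * Rpower (INR k) (/delta)).
      { rewrite <- Rpower_plus. replace (1 - 1/delta + /delta) with 1 by (field; lra).
        rewrite Rpower_1; auto. }
      set (W := Rpower (INR k) (1 - 1/delta)) in *. assert (hW : 0 < W) by apply Rpower_pos.
      set (A := Rpower A0 (/ delta)) in *. assert (hA : 0 < A) by apply Rpower_pos.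
      assert (R0 * INR cnt <= 6 * INR k) by nra.
      assert (hWV : W * Rpower (INR k) (/delta) <= W * (A * R0)).
      { apply Rmult_le_compat_l; [lra|]. eapply Rle_trans; [exact hV|]. apply Rmult_le_compat_l; lra. }
      assert (R0 * INR cnt <= R0 * (6 * A * W)) by (rewrite hkWV in H; lra).
      assert (INR cnt <= 6 * A * W) by (apply (Rmult_le_reg_l R0); lra).
      pose proof (pos_INR (2^(8*d))). pose proof (Rabs_pos c0). fold M. fold A0. fold A.
      apply Rle_trans with ((6*A)*W); [lra|]. apply Rmult_le_compat_r; lra.
    +
      assert (hF : INR B <= c0 * Rpower (2*R0/2) delta).
      { apply (hfb 2 (2*R0) N q ltac:(lra) ltac:(lra) hN hq').
        - apply NoDup_filter; auto.
        - intros x hx. apply filter_In in hx. apply hDN; tauto.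
        - intros x hx. apply filter_In in hx. destruct hx as [hx hr]. unfold bigf in hr. apply bR_true in hr.
          split; auto. }
      replace (2*R0/2) with R0 in hF by field.
      assert (hRp : Rpower R0 delta <= R0).
      { rewrite <- (Rpower_1 R0) at 2 by lra. apply Rle_Rpower; lra. }
      assert (hRp0 := Rpower_pos R0 delta).
      assert (c0 * Rpower R0 delta <= Rabs c0 * R0).
      { apply Rle_trans with (Rabs c0 * Rpower R0 delta).
        apply Rmult_le_compat_r; [lra|apply Rle_abs]. apply Rmult_le_compat_l; [apply Rabs_pos|lra]. }
      assert (R0 * INR cnt <= R0 * (6 * Rabs c0)) by nra.
      assert (INR cnt <= 6 * Rabs c0) by (apply (Rmult_le_reg_l R0); lra).
      pose proof (pos_INR (2^(8*d))). pose proof (Rpower_pos (INR (2 ^ (8 * d)) * Rabs c0 + 1) (/delta)). lra.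
  -
    intros S ndS incS hS.
    assert (hSB : (length S <= B)%nat).
    { apply incl_filter_length; auto. intros a ha. unfold bigf. apply (proj2 (bR_true _)).
      assert (la : in_Rd d a) by (apply hdim, incS; auto).
      assert (ball d a 1 a) by (split; auto; rewrite dist_refl; lra).
      specialize (hS a ha a H). unfold rr in *. lra. }
    assert (hSY : (length S <= length (vecs d (5*d)) * (m - 1))%nat) by lia.
    replace (m - 1)%nat with K in hSY by (unfold m; lia).
    assert (hSY2 : (length S <= (M - 1) * K)%nat) by nia.
    apply le_INR in hSY2. rewrite mult_INR, minus_INR in hSY2 by lia. simpl in hSY2.
    assert (hKk : INR M * INR K <= INR k) by (rewrite <- mult_INR; apply le_INR; auto).
    assert (INR K * (INR M - 1) <= INR k / INR M * (INR M - 1)).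
    { apply Rmult_le_compat_r; [lra|]. apply (Rmult_le_reg_l (INR M)); [lra|].
      replace (INR M * (INR k / INR M)) with (INR k) by (field; lra). lra. }
    replace ((1 - / INR M) * INR k) with (INR k / INR M * (INR M - 1)) by (field; lra).
    lra.
  -
    intros S ndS incS hS.
    assert (hSo : (length S <= length (filter (fun x => negb (bR (Rle_dec (Defs.dist q x) R0))) Dp))%nat).
    { apply incl_filter_length; auto. intros a ha.
      assert (la : in_Rd d a) by (apply hdim, incS; auto).
      assert (ball d a 1 a) by (split; auto; rewrite dist_refl; lra).
      specialize (hS a ha a H). unfold rr in hS. pose proof (pos_INR j).
      unfold bR. destruct (Rle_dec (Defs.dist q a) R0); simpl; auto; lra. }
    pose proof (filter_length (fun x => bR (Rle_dec (Defs.dist q x) R0)) Dp).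
    unfold cb in hcb. fold k in H.
    assert (hSk : (length S + m <= k)%nat) by lia.
    apply le_INR in hSk. rewrite plus_INR in hSk.
    assert (hkm : INR k < INR M * INR m) by (rewrite <- mult_INR; apply lt_INR; unfold m; lia).
    replace ((1 - / INR M) * INR k) with (INR k - INR k / INR M) by (field; lra).
    assert (INR k / INR M < INR m).
    { apply (Rmult_lt_reg_l (INR M)); [lra|]. replace (INR M * (INR k / INR M)) with (INR k) by (field; lra). lra. }
    lra.
Qed.


Lemma at_most_nil Q b : 0 <= b -> at_most [] Q b.
Proof. intros hb S nd inc _. destruct S as [|x S]; simpl; [lra|]. destruct (inc x (or_introl eq_refl)). Qed.

Lemma len_lt_missing (S L : list (list R)) a : NoDup S -> incl S L -> In a L -> ~ In a S ->
  (length S < length L)%nat.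
Proof.
  intros nd inc ha hn.
  apply Nat.le_lt_trans with (length (remove (list_eq_dec Req_EM_T) a L)).
  - apply NoDup_incl_length; auto. intros x hx. apply in_in_remove; auto. intros ->; auto.
  - apply remove_length_lt; auto.
Qed.

Lemma theorem11_aux :
  exists C0 : R, 0 < C0 /\
  forall (d : nat) (delta c0 : R),
    (2 <= d)%nat -> 0 < delta -> delta <= INR d ->
    exists CH : R, 0 < CH /\
    forall (P : list (list R)) (Dp : list (list R)),
      NoDup P -> (forall p, In p P -> in_Rd d p) ->
      frac_bound d delta c0 P ->
      NoDup Dp -> incl Dp P ->
      (forall a b, In a Dp -> In b Dp -> a <> b ->
         ~ exists y, ball d a 1 y /\ ball d b 1 y) ->
      let k := INR (length Dp) in
      exists (c : list R) (r : R),
        in_Rd d c /\ 0 < r /\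
        at_most Dp (ball_meets_sphere d c r) (H_bound CH delta k) /\
        at_most Dp (ball_inside d c r) ((1 - Rpower 2 (- (C0 * INR d))) * k) /\
        at_most Dp (ball_outside d c r) ((1 - Rpower 2 (- (C0 * INR d))) * k).
Proof.
  exists 8. split; [lra|].
  intros d delta c0 hd hdel _.
  assert (Eeps : Rpower 2 (- (8 * INR d)) = / INR (2^(8*d))).
  { rewrite Rpower_Ropp, pow_INR, <- Rpower_pow by (simpl; lra). rewrite mult_INR. simpl (INR 2). simpl (INR 8). f_equal. f_equal; ring. }
  rewrite Eeps.
  destruct (nat_facts d ltac:(lia)) as [hM _].
  set (M := (2^(8*d))%nat) in *.
  assert (hMpos : 2 <= INR M) by (apply le_INR in hM; simpl in hM; lra).
  exists (CHf d delta c0).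
  assert (hCH : INR M + 1 <= CHf d delta c0).
  { unfold CHf. fold M. pose proof (Rabs_pos c0). pose proof (Rpower_pos (INR M * Rabs c0 + 1) (/delta)). lra. }
  split; [lra|].
  intros P Dp ndP hP hfb nd inc hdisj k.
  assert (hdim : forall x, In x Dp -> in_Rd d x) by (intros; apply hP, inc; auto).
  assert (far : forall a b, In a Dp -> In b Dp -> a <> b -> 2 < Defs.dist a b).
  { intros a b ha hb hne. apply (disj_far d); auto. }
  assert (hHb : forall x, 1 <= x -> x <= INR M -> x <= H_bound (CHf d delta c0) delta x).
  { intros x hx1 hx2. unfold H_bound. destruct (Rlt_dec 1 delta).
    - assert (1 <= Rpower x (1 - 1/delta)).
      { apply Rle_trans with (Rpower x 0); [rewrite Rpower_O; lra|]. apply Rle_Rpower; auto.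
        assert (1/delta < 1) by (apply (Rmult_lt_reg_l delta); [lra|]; replace (delta*(1/delta)) with 1 by (field; lra); lra). lra. }
      apply Rle_trans with (CHf d delta c0 * 1); [lra|]. apply Rmult_le_compat_l; lra.
    - lra. }
  destruct (le_lt_dec (length Dp) M) as [hsmall|hlarge].
  - destruct (Nat.eq_dec (length Dp) 0) as [E0|E0].
    + apply length_zero_iff_nil in E0. subst Dp. exists (repeat 0 d), 1. split; [apply repeat_length|]. split; [lra|].
      unfold k; simpl (length []). simpl (INR 0).
      split; [|split]; apply at_most_nil.
      * unfold H_bound. destruct (Rlt_dec 1 delta); [|lra].
        apply Rmult_le_pos; [lra|]. left; apply Rpower_pos.
      * lra.
      * lra.
    + assert (exists a0, In a0 Dp) as [a0 ha0]
        by (destruct Dp as [|a Dr]; [simpl in E0; lia| exists a; left; auto]).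
      assert (hk1 : 1 <= k) by (unfold k; apply (le_INR 1); lia).
      assert (hkM : k <= INR M) by (apply le_INR; auto).
      assert (la0 := hdim a0 ha0).
      destruct a0 as [|h t]; [unfold in_Rd in la0; simpl in la0; lia|].
      exists (h :: t), 1. split; auto. split; [lra|].
      assert (hy : ball d (h::t) 1 ((h+1)::t) /\ Defs.dist (h::t) ((h+1)::t) = 1).
      { assert (E : Defs.dist (h::t) ((h+1)::t) = 1).
        { rewrite dist_sqd. simpl. rewrite sqd_refl. replace ((h - (h+1)) * ((h - (h+1)) * 1) + 0) with 1 by ring. apply sqrt_1. }
        split; [split; [unfold in_Rd in *; simpl in *; auto|lra]|auto]. }
      assert (hsm : (1 - / INR M) * k >= k - 1).
      { assert (k / INR M <= 1) by (apply (Rmult_le_reg_l (INR M)); [lra|]; field_simplify; lra).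
        replace ((1 - / INR M) * k) with (k - k / INR M) by (field; lra). lra. }
      split; [|split].
      * intros S0 ndS incS _. apply Rle_trans with k; [|apply hHb; auto].
        apply le_INR, NoDup_incl_length; auto.
      * intros S0 ndS incS hS.
        assert (hn : ~ In (h::t) S0).
        { intros hin. destruct hy as [hy1 hy2]. specialize (hS _ hin _ hy1). lra. }
        pose proof (len_lt_missing S0 Dp _ ndS incS ha0 hn).
        assert (INR (Datatypes.S (length S0)) <= INR (length Dp)) by (apply le_INR; lia). rewrite S_INR in H0.
        fold k in H0. lra.
      * intros S0 ndS incS hS.
        assert (hn : ~ In (h::t) S0).
        { intros hin. assert (ball d (h::t) 1 (h::t)) by (split; auto; rewrite dist_refl; lra).
          specialize (hS _ hin _ H). rewrite dist_refl in hS. lra. }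
        pose proof (len_lt_missing S0 Dp _ ndS incS ha0 hn).
        assert (INR (Datatypes.S (length S0)) <= INR (length Dp)) by (apply le_INR; lia). rewrite S_INR in H0.
        fold k in H0. lra.
  - apply (main_large d delta c0 P Dp); auto.
Qed.


Theorem theorem11 :
  exists C0 : R, 0 < C0 /\
  forall (d : nat) (delta c0 : R),
    (2 <= d)%nat -> 0 < delta -> delta <= INR d ->
    exists CH : R, 0 < CH /\
    forall (P : list (list R)) (Dp : list (list R)),
      NoDup P -> (forall p, In p P -> in_Rd d p) ->
      frac_bound d delta c0 P ->
      NoDup Dp -> incl Dp P ->
      (forall a b, In a Dp -> In b Dp -> a <> b ->
         ~ exists y, ball d a 1 y /\ ball d b 1 y) ->
      let k := INR (length Dp) in
      exists (c : list R) (r : R),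
        in_Rd d c /\ 0 < r /\
        at_most Dp (ball_meets_sphere d c r) (H_bound CH delta k) /\
        at_most Dp (ball_inside d c r) ((1 - Rpower 2 (- (C0 * INR d))) * k) /\
        at_most Dp (ball_outside d c r) ((1 - Rpower 2 (- (C0 * INR d))) * k).
Proof. exact theorem11_aux. Qed.
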